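(* Let $N>1$ be an integer, $0<\epsilon<e$, and $\tfrac12<\beta<1$. Set \[ K=\left\lceil \log_{1/\beta}(N)\right\rceil\cdot\left\lceil \frac{\log(e/\epsilon)}{\log(\beta/(1-\beta))}\right\rceil . \] Then there exist functions $c_1,\dots,c_K:[0,N]\to\mathbb{R}$ and $r_1,\dots,r_K:[1,N]\to\mathbb{R}$ such that $h(x,y)=\sum_{i=1}^K c_i(x)r_i(y)$ satisfies \[ \left|\Lambda\!\left(\tfrac{x+y}{2}\right)-h(x,y)\right|\le\epsilon\qquad\text{for all }(x,y)\in[0,N]\times[1,N], \] where $\Lambda(z)=\Gamma(z+1/2)/\Gamma(z+1)$. In particular $K=\mathcal{O}(\log N\log(1/\epsilon))$ for fixed $\beta$.
   Context: $\Gamma$ denotes the gamma function; $e$ is Euler's number; $\log$ is the natural logarithm. A function of the form $\sum_{i=1}^K c_i(x)r_i(y)$ (with no continuity required) is said to have rank at most $K$. *)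

(* Defs.v *)
From Stdlib Require Import Reals Lra Lia ZArith List ClassicalEpsilon.
Open Scope R_scope.

(* Gauss's product formula for the Gamma function (valid for z > 0):
   Gamma z = lim_{n -> oo} n! n^z / (z (z+1) ... (z+n)). *)
Fixpoint rising_prod (z : R) (n : nat) : R :=
  match n with
  | O => z
  | S m => rising_prod z m * (z + INR (S m))
  end.

Definition gauss_seq (z : R) (n : nat) : R :=
  INR (fact n) * Rpower (INR n) z / rising_prod z n.

(* Gamma z := the limit of the Gauss sequence (chosen by classical epsilon;
   limits are unique, so this is the limit whenever it exists, i.e. z > 0). *)
Definition Gamma (z : R) : R :=
  epsilon (inhabits 0) (fun l => Un_cv (gauss_seq z) l).

Definition Lambda (z : R) : R := Gamma (z + / 2) / Gamma (z + 1).

Definition Rceil (x : R) : Z := (- Int_part (- x))%Z.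

Definition sum1K (K : nat) (f : nat -> R) : R :=
  fold_right Rplus 0 (map f (seq 1 K)).

(* Main.v *)
Require Import Defs.
From Stdlib Require Import Reals ZArith List.
From Stdlib Require Import Lra Lia ClassicalEpsilon.
Open Scope R_scope.

Lemma CV_const (c : R) : Un_cv (fun _ => c) c.
Proof. intros e he. exists O. intros n _. unfold Rdist. rewrite Rminus_diag, Rabs_R0. lra. Qed.

Lemma CV_inv (u : nat -> R) (l : R) : Un_cv u l -> l <> 0 -> Un_cv (fun n => / u n) (/ l).
Proof.
  intros Hu Hl e he.
  assert (Hal : 0 < Rabs l) by (apply Rabs_pos_lt; auto).
  destruct (Hu (Rabs l / 2)) as [N1 HN1]; [lra|].
  destruct (Hu (e * (Rabs l * Rabs l) / 2)) as [N2 HN2].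
  { apply Rmult_lt_0_compat; [apply Rmult_lt_0_compat; nra|lra]. }
  exists (max N1 N2). intros n hn.
  specialize (HN1 n ltac:(lia)). specialize (HN2 n ltac:(lia)).
  unfold Rdist in *.
  assert (Hun : Rabs l / 2 < Rabs (u n)).
  { pose proof (Rabs_triang_inv l (u n)). rewrite <- Rabs_Ropp in HN1.
    replace (- (u n - l)) with (l - u n) in HN1 by ring. lra. }
  assert (Hu0 : u n <> 0). { intro h. rewrite h, Rabs_R0 in Hun. lra. }
  replace (/ u n - / l) with ((l - u n) / (u n * l)) by (field; auto).
  unfold Rdiv. rewrite Rabs_mult, Rabs_inv, Rabs_mult.
  rewrite <- Rabs_Ropp. replace (- (l - u n)) with (u n - l) by ring.
  apply Rmult_lt_reg_r with (Rabs (u n) * Rabs l). nra.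
  rewrite Rmult_assoc, Rinv_l by nra. rewrite Rmult_1_r.
  apply Rlt_le_trans with (e * (Rabs l * Rabs l) / 2); [lra|].
  assert (0 < e * Rabs l) by nra. nra.
Qed.

Lemma lim_bound (u : nat -> R) (l e : R) (N0 : nat) :
  Un_cv u l -> (forall n, (N0 <= n)%nat -> Rabs (u n) <= e) -> Rabs l <= e.
Proof.
  intros Hu Hb. destruct (Rle_lt_dec (Rabs l) e) as [h|h]; auto.
  destruct (Hu (Rabs l - e)) as [N HN]; [lra|].
  specialize (HN (max N N0) ltac:(lia)). specialize (Hb (max N N0) ltac:(lia)).
  unfold Rdist in HN. pose proof (Rabs_triang_inv l (u (max N N0))).
  rewrite <- Rabs_Ropp in HN. replace (- (u (max N N0) - l)) with (l - u (max N N0)) in HN by ring.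
  lra.
Qed.

Lemma ln_le_sub1 (x : R) : 0 < x -> ln x <= x - 1.
Proof. intros hx. pose proof (exp_ineq1_le (ln x)). rewrite exp_ln in H; lra. Qed.

Lemma ln_sub (a b : R) : 0 < a -> 0 < b -> ln a - ln b = ln (a / b).
Proof. intros ha hb. unfold Rdiv. rewrite ln_mult, ln_Rinv; try lra. apply Rinv_0_lt_compat; lra. Qed.

Lemma lnS_bounds (n : nat) : (1 <= n)%nat ->
  / INR (S n) <= ln (INR (S n)) - ln (INR n) <= / INR n.
Proof.
  intros hn. assert (h1 : 1 <= INR n) by (apply (le_INR 1); auto).
  rewrite S_INR. split.
  - assert (H := ln_le_sub1 (INR n / (INR n + 1)) ltac:(apply Rdiv_lt_0_compat; lra)).
    rewrite <- ln_sub in H by lra.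
    replace (INR n / (INR n + 1) - 1) with (- / (INR n + 1)) in H by (field; lra). lra.
  - rewrite ln_sub by lra.
    assert (H := ln_le_sub1 ((INR n + 1) / INR n) ltac:(apply Rdiv_lt_0_compat; lra)).
    replace ((INR n + 1) / INR n - 1) with (/ INR n) in H by (field; lra). lra.
Qed.

Lemma rising_pos (a : R) (n : nat) : 0 < a -> 0 < rising_prod a n.
Proof.
  intros ha. induction n; cbn [rising_prod]; auto.
  apply Rmult_lt_0_compat; auto. pose proof (pos_INR (S n)). lra.
Qed.

Lemma gauss_pos (a : R) (n : nat) : 0 < a -> 0 < gauss_seq a n.
Proof.
  intros ha. unfold gauss_seq, Rpower. apply Rdiv_lt_0_compat.
  apply Rmult_lt_0_compat; [apply lt_0_INR, lt_O_fact | apply exp_pos].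
  apply rising_pos; auto.
Qed.

Lemma gauss_step (a : R) (n : nat) : 0 < a -> (1 <= n)%nat ->
  gauss_seq a (S n) = gauss_seq a n *
    (INR (S n) * exp (a * (ln (INR (S n)) - ln (INR n))) / (a + INR (S n))).
Proof.
  intros ha hn. unfold gauss_seq, Rpower.
  change (fact (S n)) with (S n * fact n)%nat. rewrite mult_INR.
  change (rising_prod a (S n)) with (rising_prod a n * (a + INR (S n))).
  replace (a * ln (INR (S n))) with (a * ln (INR n) + a * (ln (INR (S n)) - ln (INR n))) by ring.
  rewrite exp_plus.
  pose proof (rising_pos a n ha). pose proof (pos_INR (S n)).
  assert (0 < INR (S n)) by (apply lt_0_INR; lia).
  field. split; lra.
Qed.

Lemma Rdiv_le_0_compat (a b : R) : 0 <= a -> 0 < b -> 0 <= a / b.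
Proof. intros. unfold Rdiv. apply Rmult_le_pos; auto. left. apply Rinv_0_lt_compat; auto. Qed.

Lemma gauss_incr (a : R) (n : nat) : 0 < a -> (1 <= n)%nat ->
  gauss_seq a n <= gauss_seq a (S n).
Proof.
  intros ha hn. rewrite gauss_step by auto.
  pose proof (gauss_pos a n ha). pose proof (lnS_bounds n hn) as [hl _].
  assert (hS : 0 < INR (S n)) by (apply lt_0_INR; lia).
  pose proof (exp_ineq1_le (a * (ln (INR (S n)) - ln (INR n)))).
  assert (a * / INR (S n) <= a * (ln (INR (S n)) - ln (INR n))) by (apply Rmult_le_compat_l; lra).
  assert (X : 1 <= INR (S n) * exp (a * (ln (INR (S n)) - ln (INR n))) / (a + INR (S n))).
  { apply Rmult_le_reg_r with (a + INR (S n)); [lra|].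
    unfold Rdiv. rewrite Rmult_assoc, Rinv_l, Rmult_1_r by lra.
    assert (INR (S n) * (1 + a * / INR (S n)) = INR (S n) + a) by (field; lra).
    assert (INR (S n) * (1 + a * / INR (S n)) <= INR (S n) * exp (a * (ln (INR (S n)) - ln (INR n)))).
    { apply Rmult_le_compat_l; lra. }
    lra. }
  nra.
Qed.

Lemma gauss_upper_step (a : R) (n : nat) : 0 < a -> (1 <= n)%nat ->
  gauss_seq a (S n) * exp (a * (1 + a) / INR (S n)) <=
  gauss_seq a n * exp (a * (1 + a) / INR n).
Proof.
  intros ha hn. rewrite gauss_step by auto.
  pose proof (gauss_pos a n ha). pose proof (lnS_bounds n hn) as [_ hu].
  assert (h1 : 1 <= INR n) by (apply (le_INR 1); auto).
  assert (hSn : INR (S n) = INR n + 1) by apply S_INR.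
  set (d := ln (INR (S n)) - ln (INR n)) in *.
  set (m := INR n) in *. rewrite hSn in *.
  assert (E1 : exp (a * d) <= exp (a / m)).
  { destruct (Req_dec (a*d) (a/m)) as [e|e]; [rewrite e; lra|].
    left; apply exp_increasing. unfold Rdiv. assert (a * d <= a * / m) by (apply Rmult_le_compat_l; lra). lra. }
  assert (E2 : (m + 1) / (a + (m + 1)) <= exp (- (a / (a + (m + 1))))).
  { pose proof (exp_ineq1_le (- (a / (a + (m + 1))))).
    replace ((m + 1) / (a + (m + 1))) with (1 + - (a / (a + (m + 1)))) by (field; lra). lra. }
  assert (E3 : a / m - a / (a + (m + 1)) <= a * (1 + a) / m - a * (1 + a) / (m + 1)).
  { replace (a / m - a / (a + (m + 1))) with (a * (1 + a) / (m * (a + (m + 1)))) by (field; lra).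
    replace (a * (1 + a) / m - a * (1 + a) / (m + 1)) with (a * (1 + a) / (m * (m + 1))) by (field; lra).
    unfold Rdiv. apply Rmult_le_compat_l. nra.
    apply Rinv_le_contravar; nra. }
  assert (X : (m + 1) * exp (a * d) / (a + (m + 1)) <= exp (a * (1 + a) / m - a * (1 + a) / (m + 1))).
  { replace ((m + 1) * exp (a * d) / (a + (m + 1))) with (exp (a*d) * ((m + 1) / (a + (m + 1)))) by (field; lra).
    apply Rle_trans with (exp (a / m) * exp (- (a / (a + (m + 1))))).
    { apply Rmult_le_compat; try lra. pose proof (exp_pos (a*d)); lra.
      apply Rdiv_le_0_compat; lra. }
    rewrite <- exp_plus. destruct (Req_dec (a / m + - (a / (a + (m + 1)))) (a * (1 + a) / m - a * (1 + a) / (m + 1))) as [e|e].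
    rewrite e; lra. left; apply exp_increasing; lra. }
  replace (exp (a * (1 + a) / m)) with (exp (a * (1 + a) / m - a * (1 + a) / (m + 1)) * exp (a * (1 + a) / (m + 1)))
    by (rewrite <- exp_plus; f_equal; ring).
  pose proof (exp_pos (a * (1 + a) / (m + 1))).
  rewrite !Rmult_assoc. apply Rmult_le_compat_l; [lra|].
  apply Rmult_le_compat_r; lra.
Qed.

Lemma gauss_bound (a : R) (n : nat) : 0 < a -> (1 <= n)%nat ->
  gauss_seq a n <= gauss_seq a 1 * exp (a * (1 + a)).
Proof.
  intros ha hn.
  assert (H : forall k, gauss_seq a (S k) * exp (a * (1 + a) / INR (S k)) <= gauss_seq a 1 * exp (a * (1 + a))).
  { induction k.
    - simpl INR. replace (a * (1 + a) / 1) with (a * (1+a)) by field. lra.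
    - eapply Rle_trans; [apply gauss_upper_step; auto; lia|]. auto. }
  destruct n; [lia|]. specialize (H n).
  assert (1 <= exp (a * (1 + a) / INR (S n))).
  { pose proof (exp_ineq1_le (a * (1 + a) / INR (S n))).
    assert (0 <= a * (1 + a) / INR (S n)). apply Rdiv_le_0_compat. nra. apply lt_0_INR; lia. lra. }
  pose proof (gauss_pos a (S n) ha). nra.
Qed.

Lemma gauss_cv (a : R) : 0 < a -> exists l, 0 < l /\ Un_cv (gauss_seq a) l.
Proof.
  intros ha.
  set (u := fun k => gauss_seq a (S k)).
  assert (Hg : Un_growing u). { intro k. unfold u. apply gauss_incr; auto; lia. }
  assert (Hb : has_ub u).
  { exists (gauss_seq a 1 * exp (a * (1 + a))). intros x [i ->]. unfold u. apply gauss_bound; auto; lia. }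
  destruct (growing_cv u Hg Hb) as [l Hl].
  exists l. split.
  - pose proof (growing_ineq u l Hg Hl 0). unfold u in H. pose proof (gauss_pos a 1 ha). lra.
  - apply CV_shift with 1%nat. intros e he. destruct (Hl e he) as [N HN]. exists N. intros n hn.
    rewrite Nat.add_1_r. apply HN; auto.
Qed.

Lemma Gamma_spec (a : R) : 0 < a -> 0 < Gamma a /\ Un_cv (gauss_seq a) (Gamma a).
Proof.
  intros ha. destruct (gauss_cv a ha) as [l [hl Hl]].
  assert (H : Un_cv (gauss_seq a) (Gamma a)).
  { unfold Gamma. apply epsilon_spec. exists l; auto. }
  rewrite (UL_sequence _ _ _ H Hl). auto.
Qed.

Fixpoint Rt (n : nat) (z : R) : R :=
  match n with
  | O => (z + 1) / (z + / 2)
  | S m => Rt m z * ((z + 1 + INR (S m)) / (z + / 2 + INR (S m)))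
  end.

Lemma rising_ratio (z : R) (n : nat) : 0 < z + / 2 ->
  rising_prod (z + 1) n / rising_prod (z + / 2) n = Rt n z.
Proof.
  intros hz. induction n.
  - reflexivity.
  - cbn [rising_prod Rt]. rewrite <- IHn.
    pose proof (rising_pos _ n hz). pose proof (pos_INR (S n)).
    replace (z + 1 + INR (S n)) with (z + 1 + INR (S n)) by ring.
    field. split; lra.
Qed.

Definition SL (L : list (R * R)) (z : R) : R :=
  fold_right (fun p acc => fst p / (z + snd p) + acc) 0 L.

Lemma SL_app L1 L2 z : SL (L1 ++ L2) z = SL L1 z + SL L2 z.
Proof. induction L1; simpl; [ring|]. unfold SL in *. simpl. rewrite IHL1. ring. Qed.

Lemma Rt_pos n z : (forall k, (k <= n)%nat -> 0 < (z + 1 + INR k) / (z + / 2 + INR k)) -> 0 < Rt n z.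
Proof.
  induction n; intros H.
  - specialize (H 0%nat (le_n _)). simpl INR in H. simpl. rewrite !Rplus_0_r in H. auto.
  - cbn [Rt]. apply Rmult_lt_0_compat. apply IHn. intros; apply H; lia. apply H; lia.
Qed.

Lemma SL_map (L : list (R * R)) (z a b : R) :
  z + a <> 0 ->
  (forall p, In p L -> z + snd p <> 0 /\ a - snd p <> 0) ->
  SL (map (fun p => (fst p * (b - snd p) / (a - snd p), snd p)) L) z =
  SL L z * (1 + (b - a) / (z + a)) - (b - a) / (z + a) * SL L (- a).
Proof.
  intros hza H. induction L as [|p L IH]; simpl.
  - unfold SL; simpl; ring.
  - unfold SL in *. simpl. rewrite IH by (intros; apply H; simpl; auto).
    destruct (H p (or_introl eq_refl)) as [h1 h2].
    assert (- a + snd p <> 0) by lra.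
    field. repeat split; auto.
Qed.

Lemma Rt_rep (n : nat) : exists L : list (R * R),
  (forall p, In p L -> 0 <= fst p /\ exists k, (k <= n)%nat /\ snd p = / 2 + INR k) /\
  (forall z, (forall k, (k <= n)%nat -> z + / 2 + INR k <> 0) -> Rt n z = 1 + SL L z).
Proof.
  induction n as [|n IH].
  - exists ((/2, /2) :: nil). split.
    + intros p [<-|[]]. simpl. split; [lra|]. exists 0%nat. split; auto. simpl; ring.
    + intros z H. specialize (H 0%nat (le_n _)). simpl INR in H. rewrite Rplus_0_r in H.
      unfold SL; simpl. field. lra.
  - destruct IH as [L [HL HR]].
    set (a := / 2 + INR (S n)). set (b := 1 + INR (S n)).
    assert (hSn : INR (S n) = INR n + 1) by apply S_INR.
    exists (map (fun p => (fst p * (b - snd p) / (a - snd p), snd p)) L ++ ((b - a) * Rt n (- a), a) :: nil).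
    split.
    + intros p Hp. apply in_app_or in Hp. destruct Hp as [Hp|[<-|[]]].
      * apply in_map_iff in Hp. destruct Hp as [q [<- Hq]].
        destruct (HL q Hq) as [h0 [k [hk hs]]]. simpl. split.
        -- assert (INR k <= INR n) by (apply le_INR; auto).
           apply Rdiv_le_0_compat. apply Rmult_le_pos; auto. unfold b. rewrite hs. lra.
           unfold a. rewrite hs. lra.
        -- exists k; split; auto.
      * simpl. split.
        -- apply Rmult_le_pos. unfold a, b; lra. left. apply Rt_pos.
           intros k hk. assert (INR k <= INR n) by (apply le_INR; auto).
           unfold a. rewrite hSn.
           replace ((- (/ 2 + (INR n + 1)) + 1 + INR k) / (- (/ 2 + (INR n + 1)) + / 2 + INR k))
             with ((INR n + / 2 - INR k) / (INR n + 1 - INR k)) by (field; lra).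
           apply Rdiv_lt_0_compat; lra.
        -- exists (S n). split; auto.
    + intros z Hz.
      assert (hza : z + a <> 0) by (unfold a; rewrite <- Rplus_assoc; apply Hz; auto).
      cbn [Rt]. rewrite HR by (intros; apply Hz; lia).
      assert (Ef : (z + 1 + INR (S n)) / (z + / 2 + INR (S n)) = 1 + (b - a) / (z + a)).
      { unfold a, b in *. rewrite <- Rplus_assoc in hza. field. lra. }
      rewrite Ef.
      rewrite SL_app, SL_map; auto.
      * replace (SL (((b - a) * Rt n (- a), a) :: nil) z) with ((b - a) * Rt n (- a) / (z + a))
          by (unfold SL; simpl; ring).
        rewrite (HR (- a)).
        -- field. auto.
        -- intros k hk. assert (INR k <= INR n) by (apply le_INR; auto). unfold a. rewrite hSn. lra.
      * intros p Hp. destruct (HL p Hp) as [_ [k [hk ->]]]. split.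
        -- rewrite <- Rplus_assoc. apply Hz. lia.
        -- assert (INR k <= INR n) by (apply le_INR; auto). unfold a. rewrite hSn. lra.
Qed.

Lemma Rt_half_sq (n : nat) : Rt n (/ 2) * Rt n (/ 2) <= 2 * INR n + 3.
Proof.
  induction n.
  - simpl. lra.
  - cbn [Rt]. rewrite S_INR.
    set (r := Rt n (/2)) in *. set (m := INR n).
    assert (0 <= m) by apply pos_INR.
    replace ((/ 2 + 1 + (m + 1)) / (/ 2 + / 2 + (m + 1))) with ((2 * m + 5) / (2 * m + 4)) by (field; lra).
    assert (H1 : (2 * m + 5) / (2 * m + 4) * ((2 * m + 5) / (2 * m + 4)) * (2 * m + 3) <= 2 * (m + 1) + 3).
    { replace ((2 * m + 5) / (2 * m + 4) * ((2 * m + 5) / (2 * m + 4)) * (2 * m + 3))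
        with ((2 * m + 5) * ((2 * m + 5) * (2 * m + 3)) / ((2 * m + 4) * (2 * m + 4))) by (field; lra).
      apply Rmult_le_reg_r with ((2 * m + 4) * (2 * m + 4)). nra.
      unfold Rdiv. rewrite Rmult_assoc, Rinv_l by nra. nra. }
    set (X := (2 * m + 5) / (2 * m + 4)) in *.
    assert (0 <= X * X) by nra.
    replace (r * X * (r * X)) with ((r * r) * (X * X)) by ring.
    apply Rle_trans with ((2 * m + 3) * (X * X)). apply Rmult_le_compat_r; auto.
    lra.
Qed.

Lemma Lambda_lim (w : R) : 0 < w + / 2 ->
  Un_cv (fun n => gauss_seq (w + / 2) n / gauss_seq (w + 1) n) (Lambda w).
Proof.
  intros hw.
  destruct (Gamma_spec (w + / 2) hw) as [_ H1].
  destruct (Gamma_spec (w + 1) ltac:(lra)) as [h2 H2].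
  unfold Lambda, Rdiv. apply CV_mult; auto. apply CV_inv; auto. lra.
Qed.

Lemma gauss_ratio (w : R) (n : nat) : 0 < w + / 2 -> (1 <= n)%nat ->
  gauss_seq (w + / 2) n / gauss_seq (w + 1) n = exp (- / 2 * ln (INR n)) * Rt n w.
Proof.
  intros hw hn. rewrite <- rising_ratio by auto.
  unfold gauss_seq, Rpower.
  replace ((w + / 2) * ln (INR n)) with (- / 2 * ln (INR n) + (w + 1) * ln (INR n)) by field.
  rewrite exp_plus.
  pose proof (rising_pos _ n hw). pose proof (rising_pos (w + 1) n ltac:(lra)).
  pose proof (exp_pos ((w + 1) * ln (INR n))). pose proof (exp_pos (- / 2 * ln (INR n))).
  assert (0 < INR (fact n)) by (apply lt_0_INR, lt_O_fact).
  field. repeat split; lra.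
Qed.

Lemma Rn_sq (n : nat) : (1 <= n)%nat ->
  exp (- / 2 * ln (INR n)) * exp (- / 2 * ln (INR n)) = / INR n.
Proof.
  intros hn. rewrite <- exp_plus.
  replace (- / 2 * ln (INR n) + - / 2 * ln (INR n)) with (- ln (INR n)) by field.
  rewrite exp_Ropp, exp_ln; auto. apply lt_0_INR; lia.
Qed.

Lemma Rn_Rt_half (n : nat) : (2 <= n)%nat ->
  exp (- / 2 * ln (INR n)) * Rt n (/ 2) <= exp 1.
Proof.
  intros hn. pose proof (Rn_sq n ltac:(lia)). pose proof (Rt_half_sq n).
  set (r := exp (- / 2 * ln (INR n))) in *. set (t := Rt n (/ 2)) in *.
  assert (h2 : 2 <= INR n) by (apply (le_INR 2); auto).
  assert (0 < r) by apply exp_pos.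
  assert (0 < t).
  { apply Rt_pos. intros. pose proof (pos_INR k). apply Rdiv_lt_0_compat; lra. }
  assert (He : 2 < exp 1) by (pose proof (exp_ineq1 1 ltac:(lra)); lra).
  assert (Hsq : (r * t) * (r * t) <= 4).
  { replace ((r * t) * (r * t)) with ((r * r) * (t * t)) by ring. rewrite H.
    apply Rmult_le_reg_l with (INR n). lra.
    rewrite <- Rmult_assoc, Rinv_r, Rmult_1_l by lra. nra. }
  nra.
Qed.

Definition Dt (t : R) (f : R -> R) : R -> R := fun u => (f u - f t) / (u - t).

Fixpoint Nw (l : list R) (f : R -> R) (y : R) : R :=
  match l with
  | nil => 0
  | t :: l' => f t + (y - t) * Nw l' (Dt t f) y
  end.

Fixpoint coef (l : list R) (f : R -> R) (k : nat) : R :=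
  match l with
  | nil => 0
  | t :: l' => match k with O => f t | S k' => coef l' (Dt t f) k' end
  end.

Fixpoint piB (l : list R) (k : nat) (y : R) : R :=
  match l with
  | nil => 0
  | t :: l' => match k with O => 1 | S k' => (y - t) * piB l' k' y end
  end.

Definition sumto (m : nat) (F : nat -> R) : R := fold_right Rplus 0 (map F (seq 0 m)).

Lemma sumto_S m F : sumto (S m) F = F 0%nat + sumto m (fun k => F (S k)).
Proof.
  unfold sumto. simpl. f_equal. rewrite <- seq_shift, map_map. reflexivity.
Qed.

Lemma sumto_scal m F c : sumto m (fun k => c * F k) = c * sumto m F.
Proof.
  revert F. induction m; intros F. unfold sumto; simpl; ring.
  rewrite !sumto_S, IHm. ring.
Qed.

Lemma sumto_ext m F G : (forall k, (k < m)%nat -> F k = G k) -> sumto m F = sumto m G.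
Proof.
  revert F G. induction m; intros F G H. reflexivity.
  rewrite !sumto_S. rewrite H by lia. f_equal. apply IHm. intros; apply H; lia.
Qed.

Lemma Nw_sum l f y : Nw l f y = sumto (length l) (fun k => coef l f k * piB l k y).
Proof.
  revert f. induction l as [|t l IH]; intros f. reflexivity.
  simpl length. rewrite sumto_S. simpl. rewrite IH.
  rewrite <- sumto_scal. f_equal. ring. apply sumto_ext. intros; simpl; ring.
Qed.

Lemma Nw_ext l f g y : (forall u, In u l -> f u = g u) -> Nw l f y = Nw l g y.
Proof.
  revert f g. induction l as [|t l IH]; intros f g H. reflexivity.
  simpl. rewrite H by (simpl; auto). f_equal. f_equal. apply IH.
  intros u hu. unfold Dt. rewrite !H by (simpl; auto). reflexivity.
Qed.

Lemma Nw_add l f g y : Nw l (fun u => f u + g u) y = Nw l f y + Nw l g y.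
Proof.
  revert f g. induction l as [|t l IH]; intros f g. simpl; ring.
  simpl. rewrite (Nw_ext l (Dt t (fun u => f u + g u)) (fun u => Dt t f u + Dt t g u)).
  rewrite IH. ring. intros u _. unfold Dt, Rdiv. ring.
Qed.

Lemma Nw_scal l f c y : Nw l (fun u => c * f u) y = c * Nw l f y.
Proof.
  revert f. induction l as [|t l IH]; intros f. simpl; ring.
  simpl. rewrite (Nw_ext l (Dt t (fun u => c * f u)) (fun u => c * Dt t f u)).
  rewrite IH. ring. intros u _. unfold Dt, Rdiv. ring.
Qed.

Lemma Nw_zero l y : Nw l (fun _ => 0) y = 0.
Proof.
  rewrite (Nw_ext l (fun _ => 0) (fun u => 0 * 0)) by (intros; ring).
  rewrite Nw_scal. ring.
Qed.

Lemma Nw_const l c y : l <> nil -> Nw l (fun _ => c) y = c.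
Proof.
  destruct l as [|t l]. intros []; auto. intros _. simpl.
  rewrite (Nw_ext l (Dt t (fun _ => c)) (fun _ => 0)). rewrite Nw_zero. ring.
  intros; unfold Dt, Rdiv; ring.
Qed.

Lemma Nw_cv l y (F : nat -> R -> R) (G : R -> R) :
  (forall u, Un_cv (fun n => F n u) (G u)) ->
  Un_cv (fun n => Nw l (F n) y) (Nw l G y).
Proof.
  revert F G. induction l as [|t l IH]; intros F G H.
  - simpl. apply CV_const.
  - simpl. apply CV_plus. apply H. apply CV_mult. apply CV_const.
    apply IH. intros u. unfold Dt. unfold Rdiv. apply CV_mult. apply CV_minus; apply H.
    apply CV_const.
Qed.

Definition gp (p : R) (u : R) : R := / (p + u).

Definition prodE (l : list R) (p y : R) : R :=
  fold_right Rmult 1 (map (fun t => (t - y) / (p + t)) l).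

Lemma Nw_gp l p y : NoDup l -> (forall t, In t l -> 0 < p + t) -> 0 < p + y ->
  gp p y - Nw l (gp p) y = gp p y * prodE l p y.
Proof.
  revert y. induction l as [|t l IH]; intros y hnd hpos hy.
  - unfold prodE; simpl. ring.
  - inversion hnd as [|t' l' hnin hnd']. subst.
    simpl. rewrite (Nw_ext l (Dt t (gp p)) (fun u => (- / (p + t)) * gp p u)).
    + rewrite Nw_scal.
      assert (E : Nw l (gp p) y = gp p y - gp p y * prodE l p y).
      { rewrite <- IH; auto. ring. intros; apply hpos; simpl; auto. }
      rewrite E. unfold prodE. simpl. fold (prodE l p y). unfold gp.
      assert (0 < p + t) by (apply hpos; simpl; auto).
      field. split; lra.
    + intros u hu. unfold Dt, gp.
      assert (0 < p + t) by (apply hpos; simpl; auto).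
      assert (0 < p + u) by (apply hpos; simpl; auto).
      assert (u - t <> 0). { intro h. apply hnin. replace t with u by lra. auto. }
      field. repeat split; lra.
Qed.

Lemma prodE_bound l p y q : 0 <= q -> (forall t, In t l -> Rabs ((t - y) / (p + t)) <= q) ->
  Rabs (prodE l p y) <= q ^ length l.
Proof.
  intros hq. induction l as [|t l IH]; intros H.
  - unfold prodE. simpl. rewrite Rabs_R1. lra.
  - unfold prodE. simpl. fold (prodE l p y). rewrite Rabs_mult.
    apply Rmult_le_compat; try apply Rabs_pos. apply H; simpl; auto.
    apply IH. intros; apply H; simpl; auto.
Qed.

Lemma Nw_SL_err (L : list (R * R)) (x y q : R) (l : list R) :
  (forall p, In p L -> 0 <= fst p /\ / 2 <= snd p) ->
  0 <= x -> 1 <= y -> NoDup l -> (forall t, In t l -> 1 <= t) -> 0 <= q ->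
  (forall t, In t l -> Rabs (t - y) <= q * t) ->
  Rabs (SL L ((x + y) / 2) - Nw l (fun u => SL L ((x + u) / 2)) y) <= q ^ length l * SL L (/ 2).
Proof.
  intros HL hx hy hnd hl hq hty.
  induction L as [|[w s] L IH].
  - unfold SL. simpl. rewrite Nw_zero. rewrite Rminus_0_r, Rabs_R0. lra.
  - destruct (HL (w, s) (or_introl eq_refl)) as [hw hs]. simpl in hw, hs.
    assert (IH' := IH ltac:(intros; apply HL; simpl; auto)).
    assert (SLc : forall z, SL ((w, s) :: L) z = w / (z + s) + SL L z) by reflexivity.
    rewrite !SLc. set (T := SL L) in *.
    rewrite (Nw_ext l (fun u => SL ((w, s) :: L) ((x + u) / 2))
                      (fun u => (2 * w) * gp (x + 2 * s) u + T ((x + u) / 2))).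
    2:{ intros u hu. specialize (hl u hu). rewrite SLc. unfold gp. f_equal. field. lra. }
    rewrite Nw_add, Nw_scal. change (fun u => gp (x + 2 * s) u) with (gp (x + 2 * s)).
    replace (w / ((x + y) / 2 + s) + T ((x + y) / 2) -
       (2 * w * Nw l (gp (x + 2 * s)) y + Nw l (fun u => T ((x + u) / 2)) y))
      with ((2 * w) * (gp (x + 2 * s) y - Nw l (gp (x + 2 * s)) y) +
            (T ((x + y) / 2) - Nw l (fun u => T ((x + u) / 2)) y))
      by (unfold gp; field; lra).
    rewrite Nw_gp; auto; [| intros t ht; specialize (hl t ht); lra | lra].
    eapply Rle_trans; [apply Rabs_triang|].
    replace (q ^ length l * (w / (/ 2 + s) + T (/ 2))) with
      (q ^ length l * (w / (/ 2 + s)) + q ^ length l * T (/ 2)) by ring.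
    apply Rplus_le_compat; [|exact IH'].
    rewrite (Rabs_mult (2 * w)), (Rabs_mult (gp _ y)).
    assert (HP := prodE_bound l (x + 2 * s) y q hq).
    assert (HP' : Rabs (prodE l (x + 2 * s) y) <= q ^ length l).
    { apply HP. intros t ht. specialize (hl t ht). specialize (hty t ht).
      unfold Rdiv. rewrite Rabs_mult, Rabs_inv, (Rabs_right (x + 2 * s + t)) by lra.
      apply Rmult_le_reg_r with (x + 2 * s + t). lra.
      rewrite Rmult_assoc, Rinv_l, Rmult_1_r by lra.
      apply Rle_trans with (q * t); auto. apply Rmult_le_compat_l; lra. }
    rewrite (Rabs_right (2 * w)) by lra.
    unfold gp. rewrite Rabs_inv, (Rabs_right (x + 2 * s + y)) by lra.
    assert (0 <= q ^ length l) by (apply pow_le; auto).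
    assert (E : 2 * w * / (x + 2 * s + y) <= w / (/ 2 + s)).
    { unfold Rdiv. replace (2 * w * / (x + 2 * s + y)) with (w * (2 / (x + 2 * s + y))) by (field; lra).
      apply Rmult_le_compat_l; auto.
      replace (/ (/ 2 + s)) with (2 / (1 + 2 * s)) by (field; lra).
      unfold Rdiv. apply Rmult_le_compat_l. lra. apply Rinv_le_contravar; lra. }
    assert (0 <= 2 * w * / (x + 2 * s + y)) by (apply Rmult_le_pos; [lra| left; apply Rinv_0_lt_compat; lra]).
    replace (2 * w * (/ (x + 2 * s + y) * Rabs (prodE l (x + 2 * s) y))) with
      ((2 * w * / (x + 2 * s + y)) * Rabs (prodE l (x + 2 * s) y)) by ring.
    rewrite Rmult_comm. apply Rmult_le_compat; auto. apply Rabs_pos.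
Qed.

Lemma fold_Rplus_init c l : fold_right Rplus c l = fold_right Rplus 0 l + c.
Proof. induction l; simpl; [ring|]. rewrite IHl. ring. Qed.

Lemma sumto_Sr m F : sumto (S m) F = sumto m F + F m.
Proof.
  unfold sumto. rewrite seq_S, map_app, fold_right_app. simpl.
  rewrite fold_Rplus_init. f_equal. ring.
Qed.

Lemma sumto_zero m : sumto m (fun _ => 0) = 0.
Proof. induction m. reflexivity. rewrite sumto_Sr, IHm. ring. Qed.

Lemma sumto_delta m j0 (v : R) (F : nat -> R) :
  (j0 < m)%nat -> (forall J, J <> j0 -> F J = 0) -> F j0 = v -> sumto m F = v.
Proof.
  induction m; intros hj H Hv. lia.
  rewrite sumto_Sr. destruct (Nat.eq_dec j0 m) as [->|ne].
  - rewrite (sumto_ext m F (fun _ => 0)). rewrite sumto_zero, Hv. ring.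
    intros k hk. apply H. lia.
  - rewrite IHm; auto; [|lia]. rewrite H; auto. ring.
Qed.

Lemma sumto_add B m G : sumto (B + m) G = sumto B G + sumto m (fun k => G (B + k)%nat).
Proof.
  revert G. induction B; intros G. simpl. unfold sumto at 2. simpl. rewrite Rplus_0_l. reflexivity.
  simpl plus. rewrite !sumto_S. rewrite IHB. simpl. ring.
Qed.

Lemma sumto_blocks A B G :
  sumto (A * B) G = sumto A (fun J => sumto B (fun k => G (J * B + k)%nat)).
Proof.
  revert G. induction A; intros G. reflexivity.
  change (S A * B)%nat with (B + A * B)%nat. rewrite sumto_add, IHA, sumto_S.
  f_equal.
  apply sumto_ext; intros; apply sumto_ext; intros; f_equal; lia.
Qed.

Lemma sum1K_sumto K f : sum1K K f = sumto K (fun k => f (S k)).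
Proof. unfold sum1K, sumto. rewrite <- seq_shift, map_map. reflexivity. Qed.

Fixpoint nodesL (a h : R) (m : nat) : list R :=
  match m with
  | O => nil
  | S k => (a + INR k * h) :: nodesL a h k
  end.

Lemma nodesL_length a h m : length (nodesL a h m) = m.
Proof. induction m; simpl; auto. Qed.

Lemma nodesL_in a h m : 0 < h -> forall t, In t (nodesL a h m) -> a <= t < a + INR m * h.
Proof.
  intros hh. induction m; cbn [nodesL In]; intros t ht. destruct ht.
  rewrite S_INR. pose proof (pos_INR m).
  destruct ht as [<-|ht]. split; nra.
  specialize (IHm t ht). nra.
Qed.

Lemma nodesL_nodup a h m : 0 < h -> NoDup (nodesL a h m).
Proof.
  intros hh. induction m; simpl. constructor. constructor; auto.
  intro hin. apply nodesL_in in hin; auto. lra.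
Qed.

Lemma piece_exists (A : R) (K1 : nat) : 1 < A -> (1 <= K1)%nat ->
  forall y, 1 <= y <= A ^ K1 -> exists J, (J < K1)%nat /\ A ^ J <= y <= A ^ (S J).
Proof.
  intros hA. induction K1; intros hK y hy. lia.
  destruct (Nat.eq_dec K1 0) as [->|ne].
  - exists 0%nat. split; [lia|]. simpl in *. lra.
  - destruct (Rle_lt_dec y (A ^ K1)) as [h|h].
    + destruct (IHK1 ltac:(lia) y ltac:(lra)) as [J [hJ HJ]]. exists J; split; auto.
    + exists K1. split; [lia|]. lra.
Qed.

Lemma Rceil_ge x : x <= IZR (Rceil x).
Proof.
  unfold Rceil. rewrite opp_IZR. destruct (base_Int_part (- x)) as [h _]. lra.
Qed.

Lemma Rceil_nat x : 0 < x -> (1 <= Z.to_nat (Rceil x))%nat /\ x <= INR (Z.to_nat (Rceil x)).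
Proof.
  intros hx. pose proof (Rceil_ge x).
  assert (hz : (0 < Rceil x)%Z) by (apply lt_IZR; lra).
  rewrite INR_IZR_INZ, Z2Nat.id by lia. split; [lia|lra].
Qed.

Lemma exp_le_mono x y : x <= y -> exp x <= exp y.
Proof. intros [h|h]. left; apply exp_increasing; auto. subst; lra. Qed.

Lemma divmod_blk (J k K2 : nat) : (k < K2)%nat ->
  ((S (J * K2 + k) - 1) / K2 = J)%nat /\ ((S (J * K2 + k) - 1) mod K2 = k)%nat.
Proof.
  intros hk. split.
  - symmetry. apply (Nat.div_unique _ _ _ k); auto. lia.
  - symmetry. apply (Nat.mod_unique _ _ J k); auto. lia.
Qed.

Theorem theorem3p5 (N : nat) (eps beta : R)
  (hN : (1 < N)%nat) (heps0 : 0 < eps) (hepsE : eps < exp 1)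
  (hb1 : / 2 < beta) (hb2 : beta < 1) :
  let K : nat :=
    (Z.to_nat (Rceil (ln (INR N) / ln (/ beta))) *
     Z.to_nat (Rceil (ln (exp 1 / eps) / ln (beta / (1 - beta)))))%nat in
  exists (c r : nat -> R -> R),
    forall x y : R, 0 <= x <= INR N -> 1 <= y <= INR N ->
      Rabs (Lambda ((x + y) / 2) - sum1K K (fun i => c i x * r i y)) <= eps.
Proof.
  intros K. subst K.
  assert (hbeta : 0 < beta) by lra.
  assert (hA : 1 < / beta).
  { rewrite <- Rinv_1. apply Rinv_lt_contravar; lra. }
  set (q := (1 - beta) / beta).
  assert (hq0 : 0 < q) by (unfold q; apply Rdiv_lt_0_compat; lra).
  assert (hq1 : q < 1).
  { unfold q. apply Rmult_lt_reg_r with beta; auto. unfold Rdiv. rewrite Rmult_assoc, Rinv_l; lra. }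
  assert (hAq : / beta = 1 + q) by (unfold q; field; lra).
  assert (hNR : 1 < INR N) by (apply (lt_INR 1); auto).
  assert (hlnN : 0 < ln (INR N)).
  { rewrite <- ln_1. apply ln_increasing; [lra|]. apply (lt_INR 1); auto. }
  assert (hlnA : 0 < ln (/ beta)) by (rewrite <- ln_1; apply ln_increasing; lra).
  destruct (Rceil_nat (ln (INR N) / ln (/ beta))) as [hK1 HK1].
  { apply Rdiv_lt_0_compat; auto. }
  set (K1 := Z.to_nat (Rceil (ln (INR N) / ln (/ beta)))) in *.
  assert (HNA : INR N <= (/ beta) ^ K1).
  { rewrite <- (exp_ln (INR N)) by lra. rewrite <- (exp_ln ((/ beta) ^ K1)) by (apply pow_lt; lra).
    apply exp_le_mono. rewrite ln_pow by lra.
    apply Rmult_le_reg_r with (/ ln (/ beta)). apply Rinv_0_lt_compat; auto.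
    rewrite Rmult_assoc, Rinv_r, Rmult_1_r by lra. exact HK1. }
  assert (hle : 0 < ln (exp 1 / eps)).
  { rewrite <- ln_1. apply ln_increasing; [lra|].
    apply Rmult_lt_reg_r with eps; auto. unfold Rdiv. rewrite Rmult_assoc, Rinv_l; lra. }
  assert (hbq : beta / (1 - beta) = / q) by (unfold q; field; lra).
  assert (hlq : 0 < ln (beta / (1 - beta))).
  { rewrite hbq. rewrite <- ln_1. apply ln_increasing; [lra|].
    rewrite <- Rinv_1. apply Rinv_lt_contravar; lra. }
  destruct (Rceil_nat (ln (exp 1 / eps) / ln (beta / (1 - beta)))) as [hK2 HK2].
  { apply Rdiv_lt_0_compat; auto. }
  set (K2 := Z.to_nat (Rceil (ln (exp 1 / eps) / ln (beta / (1 - beta))))) in *.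
  assert (HqK : q ^ K2 * exp 1 <= eps).
  { assert (q ^ K2 <= eps / exp 1).
    { rewrite <- (exp_ln (q ^ K2)) by (apply pow_lt; lra).
      rewrite <- (exp_ln (eps / exp 1)) by (apply Rdiv_lt_0_compat; auto; apply exp_pos).
      apply exp_le_mono. rewrite ln_pow by lra.
      replace (eps / exp 1) with (/ (exp 1 / eps)) by (field; split; [apply exp_neq_0|lra]).
      rewrite ln_Rinv by (apply Rdiv_lt_0_compat; auto; apply exp_pos).
      replace (ln q) with (- ln (beta / (1 - beta))) by (rewrite hbq, ln_Rinv; [ring|lra]).
      assert (ln (exp 1 / eps) <= INR K2 * ln (beta / (1 - beta))).
      { apply Rmult_le_reg_r with (/ ln (beta / (1 - beta))). apply Rinv_0_lt_compat; auto.
        rewrite Rmult_assoc, Rinv_r, Rmult_1_r by lra. exact HK2. }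
      lra. }
    pose proof (exp_pos 1).
    apply Rmult_le_reg_r with (/ exp 1). apply Rinv_0_lt_compat; auto.
    rewrite Rmult_assoc, Rinv_r, Rmult_1_r by lra. exact H. }
  assert (hK2R : 1 <= INR K2) by (apply (le_INR 1); auto).
  set (A := / beta) in *.
  set (hJ := fun J : nat => q * A ^ J / INR K2).
  set (nodes := fun J : nat => nodesL (A ^ J) (hJ J) K2).
  set (Jsel := fun y : R => epsilon (inhabits 0%nat) (fun J => (J < K1)%nat /\ A ^ J <= y <= A ^ (S J))).
  set (G := fun x u => Lambda ((x + Rmax 1 u) / 2)).
  exists (fun i x => coef (nodes ((i - 1) / K2)%nat) (G x) ((i - 1) mod K2)).
  exists (fun i y => if Nat.eqb (Jsel y) ((i - 1) / K2)%nat
              then piB (nodes ((i - 1) / K2)%nat) ((i - 1) mod K2) y else 0).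
  intros x y hx hy.
  assert (HJ : (Jsel y < K1)%nat /\ A ^ (Jsel y) <= y <= A ^ (S (Jsel y))).
  { unfold Jsel. apply epsilon_spec. apply piece_exists; auto. lra. }
  set (J := Jsel y) in *.
  destruct HJ as [hJK [hJl hJu]].
  assert (Hsum : sum1K (K1 * K2) (fun i =>
      coef (nodes ((i - 1) / K2)%nat) (G x) ((i - 1) mod K2) *
      (if Nat.eqb J ((i - 1) / K2)%nat then piB (nodes ((i - 1) / K2)%nat) ((i - 1) mod K2) y else 0))
      = Nw (nodes J) (G x) y).
  { rewrite sum1K_sumto, sumto_blocks.
    apply (sumto_delta K1 J); auto.
    - intros J' hJ'. rewrite (sumto_ext K2 _ (fun _ => 0)). apply sumto_zero.
      intros k hk. destruct (divmod_blk J' k K2 hk) as [-> ->].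
      replace (J =? J')%nat with false. ring. symmetry. apply Nat.eqb_neq. auto.
    - rewrite Nw_sum. unfold nodes. rewrite nodesL_length. apply sumto_ext.
      intros k hk. destruct (divmod_blk J k K2 hk) as [-> ->]. rewrite Nat.eqb_refl. reflexivity. }
  rewrite Hsum. clear Hsum.
  assert (hA1 : 1 <= A ^ J) by (apply (Rle_pow A 0 J); [lra|lia]).
  assert (hh : 0 < hJ J) by (unfold hJ; apply Rdiv_lt_0_compat; [apply Rmult_lt_0_compat; lra|lra]).
  assert (Hnd : NoDup (nodes J)) by (apply nodesL_nodup; auto).
  assert (Hin : forall t, In t (nodes J) -> A ^ J <= t < A ^ J + q * A ^ J).
  { intros t ht. apply nodesL_in in ht; auto. unfold hJ in ht.
    replace (INR K2 * (q * A ^ J / INR K2)) with (q * A ^ J) in ht by (field; lra). auto. }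
  assert (HAS : A ^ S J = A ^ J + q * A ^ J) by (simpl; rewrite hAq; ring).
  set (l := nodes J) in *.
  set (Fn := fun n u => gauss_seq ((x + Rmax 1 u) / 2 + / 2) n / gauss_seq ((x + Rmax 1 u) / 2 + 1) n).
  assert (H1 : forall u, Un_cv (fun n => Fn n u) (G x u)).
  { intros u. unfold Fn, G. apply Lambda_lim. pose proof (Rmax_l 1 u). lra. }
  assert (Hcv := CV_minus _ _ _ _ (H1 y) (Nw_cv l y Fn (G x) H1)).
  assert (HGy : G x y = Lambda ((x + y) / 2)) by (unfold G; rewrite Rmax_right; lra).
  rewrite HGy in Hcv.
  apply (lim_bound _ _ eps 2%nat Hcv).
  intros n hn.
  destruct (Rt_rep n) as [L [HL HR]].
  set (Rn := exp (- / 2 * ln (INR n))).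
  assert (HF : forall u, 1 <= u -> Fn n u = Rn * (1 + SL L ((x + u) / 2))).
  { intros u hu. unfold Fn. rewrite Rmax_right by lra.
    rewrite gauss_ratio by (lra || lia). rewrite HR. reflexivity.
    intros k hk. pose proof (pos_INR k). lra. }
  rewrite HF by lra.
  rewrite (Nw_ext l (Fn n) (fun u => Rn * (1 + SL L ((x + u) / 2)))).
  2:{ intros u hu. apply HF. destruct (Hin u hu). lra. }
  rewrite Nw_scal, Nw_add, Nw_const by (unfold l, nodes; destruct K2; [lia|simpl; discriminate]).
  replace (Rn * (1 + SL L ((x + y) / 2)) - Rn * (1 + Nw l (fun u => SL L ((x + u) / 2)) y))
    with (Rn * (SL L ((x + y) / 2) - Nw l (fun u => SL L ((x + u) / 2)) y)) by ring.
  assert (hRn : 0 < Rn) by apply exp_pos.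
  rewrite Rabs_mult, (Rabs_right Rn) by lra.
  assert (Herr := Nw_SL_err L x y q l).
  assert (Herr' : Rabs (SL L ((x + y) / 2) - Nw l (fun u => SL L ((x + u) / 2)) y) <= q ^ K2 * SL L (/ 2)).
  { replace K2 with (length l) by (unfold l, nodes; apply nodesL_length).
    apply Herr; try lra; auto.
    - intros p hp. destruct (HL p hp) as [hw [k [_ hs]]]. rewrite hs. pose proof (pos_INR k). lra.
    - intros t ht. destruct (Hin t ht). lra.
    - intros t ht. destruct (Hin t ht). apply Rabs_le. split; nra. }
  assert (HRt : Rt n (/ 2) = 1 + SL L (/ 2)).
  { apply HR. intros k hk. pose proof (pos_INR k). lra. }
  assert (HRR := Rn_Rt_half n hn). fold Rn in HRR.
  assert (0 <= q ^ K2) by (apply pow_le; lra).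
  assert (0 <= SL L (/ 2)).
  { clear -HL. induction L as [|[w s] L IH]. unfold SL; simpl; lra.
    destruct (HL (w, s) (or_introl eq_refl)) as [hw [k [_ hs]]]. simpl in hw, hs.
    change (SL ((w, s) :: L) (/ 2)) with (w / (/ 2 + s) + SL L (/ 2)).
    pose proof (pos_INR k).
    assert (0 <= w / (/ 2 + s)) by (apply Rdiv_le_0_compat; lra).
    assert (0 <= SL L (/ 2)). apply IH. intros; apply HL; simpl; auto. lra. }
  apply Rle_trans with (Rn * (q ^ K2 * SL L (/ 2))).
  { apply Rmult_le_compat_l; lra. }
  apply Rle_trans with (q ^ K2 * (Rn * Rt n (/ 2))).
  { rewrite HRt. nra. }
  apply Rle_trans with (q ^ K2 * exp 1); [|lra].
  apply Rmult_le_compat_l; lra.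
Qed.
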